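(* Let $R$ be a commutative domain, $B=R(t,\sigma,H,J)$, $M$ an $R$-weight $B$-module, and $\mathfrak m\in\operatorname{Maxspec}(R)$ with $\sigma(\mathfrak m)\notin\mathcal S(B)$. Then: (1) for all $j\in J\setminus\sigma(\mathfrak m)$ and $h\in H\setminus\sigma(\mathfrak m)$, the $R/\mathfrak m$-linear maps $M_{\mathfrak m}\to M_{\sigma(\mathfrak m)}$, $v\mapsto (jt)v$, and $M_{\sigma(\mathfrak m)}\to M_{\mathfrak m}$, $v\mapsto(\sigma^{-1}(h)t^{-1})v$, are injective; (2) $\dim_{R/\mathfrak m}M_{\mathfrak m}=\dim_{R/\sigma(\mathfrak m)}M_{\sigma(\mathfrak m)}$.
   Context: $\Bbbk$ is a field; all algebras are associative unital $\Bbbk$-algebras. For an algebra $R$ and $\sigma\in\operatorname{Aut}_\Bbbk(R)$, $R[t,t^{-1};\sigma]$ is the skew Laurent ring: generated over $R$ by $t,t^{-1}$ with $tt^{-1}=t^{-1}t=1$ and $t^{\pm1}r=\sigma^{\pm1}(r)t^{\pm1}$ for $r\in R$. Given two-sided ideals $H,J$ of $R$, set $I^{(0)}=R$, $I^{(n)}=J\sigma(J)\cdots\sigma^{n-1}(J)$ for $n\ge1$, and $I^{(n)}=\sigma^{-1}(H)\sigma^{-2}(H)\cdots\sigma^{n}(H)$ for $n\le-1$; it is assumed throughout that $I^{(n)}\neq0$ for all $n\in\mathbb Z$. The Bell–Rogalski (BR) algebra is $R(t,\sigma,H,J)=\bigoplus_{n\in\mathbb Z}I^{(n)}t^n\subseteq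 R[t,t^{-1};\sigma]$; write $B_n=I^{(n)}t^n$. For $R$ commutative, $\mathcal S(B)=\{\mathfrak p\in\operatorname{Spec}(R):\mathfrak p\supseteq HJ\}$. For $R$ a commutative domain, a left $B$-module $M$ is an $R$-weight module if $M=\bigoplus_{\mathfrak m\in\operatorname{Maxspec}(R)}M_{\mathfrak m}$ where $M_{\mathfrak m}=\{v\in M:\mathfrak m v=0\}$ and $\dim_{R/\mathfrak m}M_{\mathfrak m}<\infty$ for all $\mathfrak m$. Note $B_k M_{\mathfrak m}\subseteq M_{\sigma^k(\mathfrak m)}$; $M_{\sigma(\mathfrak m)}$ is regarded as an $R/\mathfrak m$-vector space via the field isomorphism $R/\mathfrak m\to R/\sigma(\mathfrak m)$ induced by $\sigma$. *)

(* Defs.v *)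
From mathcomp Require Import all_boot all_order all_algebra.
Set Implicit Arguments. Unset Strict Implicit. Unset Printing Implicit Defensive.
Import GRing.Theory.
Local Open Scope ring_scope.

Section BR.
Variable R : comNzRingType.

Definition is_ideal (I : R -> Prop) : Prop :=
  [/\ I 0, (forall x y, I x -> I y -> I (x + y)) & (forall r x, I x -> I (r * x))].

Definition is_prime_ideal (P : R -> Prop) : Prop :=
  [/\ is_ideal P, ~ P 1 & (forall x y, P (x * y) -> P x \/ P y)].

Definition is_max_ideal (P : R -> Prop) : Prop :=
  [/\ is_ideal P, ~ P 1 &
      (forall I, is_ideal I -> (forall x, P x -> I x) ->
                 (forall x, I x -> P x) \/ I 1)].

Definition same_ideal (I1 I2 : R -> Prop) : Prop := forall x, I1 x <-> I2 x.

Definition idprod (I J : R -> Prop) : R -> Prop :=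
  fun x => exists n (a b : 'I_n -> R),
    (forall i, I (a i) /\ J (b i)) /\ x = \sum_(i < n) a i * b i.

Fixpoint idprods (l : seq (R -> Prop)) : R -> Prop :=
  match l with
  | [::] => fun _ => True
  | [:: Q] => Q
  | Q :: l' => idprod Q (idprods l')
  end.

Variables (sigma : R -> R) (sigmai : R -> R).
(* sigma is a ring automorphism with inverse sigmai (hypotheses in the theorem). *)

Definition spow (k : int) (x : R) : R :=
  match k with
  | Posz n => iter n sigma x
  | Negz n => iter n.+1 sigmai x
  end.

Definition imgp (k : int) (I : R -> Prop) : R -> Prop :=
  fun x => I (spow (- k) x).

Variables (H J : R -> Prop).

Definition Ipow (n : int) : R -> Prop :=
  match n with
  | Posz 0 => fun _ => True
  | Posz k.+1 => idprods [seq imgp (Posz i) J | i <- iota 0 k.+1]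
  | Negz k => idprods [seq imgp (- (Posz i.+1)) H | i <- iota 0 k.+1]
  end.

Definition inSB (P : R -> Prop) : Prop :=
  is_prime_ideal P /\ (forall x, idprod H J x -> P x).

Variable M : zmodType.
(* A left B-module structure on M, B = (+)_n I^(n) t^n, given by the action of
   homogeneous elements:  act n r v  =  (r t^n) v   for r in I^(n)
   (values for r outside I^(n) are irrelevant). *)
Definition is_BR_module (act : int -> R -> M -> M) : Prop :=
  [/\ (forall n r v w, Ipow n r -> act n r (v + w) = act n r v + act n r w),
      (forall n r s v, Ipow n r -> Ipow n s -> act n (r + s) v = act n r v + act n s v),
      (forall v, act 0 1 v = v) &
      (forall n m r s v, Ipow n r -> Ipow m s ->
          act n r (act m s v) = act (n + m) (r * spow n s) v)].

Variable act : int -> R -> M -> M.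

Definition wsp (P : R -> Prop) (v : M) : Prop := forall r, P r -> act 0 r v = 0.

(* M_m has dimension n over R/m: a basis b_1..b_n of M_m, i.e. spanning
   with coefficients in R and linearly independent modulo m. *)
Definition has_basis (P : R -> Prop) (n : nat) : Prop :=
  exists b : 'I_n -> M,
    [/\ (forall i, wsp P (b i)),
        (forall v, wsp P v -> exists c : 'I_n -> R, v = \sum_(i < n) act 0 (c i) (b i)) &
        (forall c : 'I_n -> R, \sum_(i < n) act 0 (c i) (b i) = 0 -> forall i, P (c i))].

Definition weight_module : Prop :=
  [/\
      (forall v, exists n (ms : 'I_n -> R -> Prop) (vs : 'I_n -> M),
          [/\ (forall i, is_max_ideal (ms i) /\ wsp (ms i) (vs i)),
              (forall i j, i != j -> ~ same_ideal (ms i) (ms j)) &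
              v = \sum_(i < n) vs i]),
      (forall n (ms : 'I_n -> R -> Prop) (vs : 'I_n -> M),
          (forall i, is_max_ideal (ms i) /\ wsp (ms i) (vs i)) ->
          (forall i j, i != j -> ~ same_ideal (ms i) (ms j)) ->
          \sum_(i < n) vs i = 0 -> forall i, vs i = 0) &
      (forall P, is_max_ideal P -> exists n, has_basis P n)].

End BR.

(* Main.v *)
Require Import Defs.
From mathcomp Require Import all_boot all_order all_algebra.
From Stdlib Require Import Classical.
From mathcomp Require Import ring.
Set Implicit Arguments. Unset Strict Implicit.
Import GRing.Theory.
Local Open Scope ring_scope.

Section Ideals.
Variable R : comNzRingType.
Variable P : R -> Prop.
Hypothesis HP : is_ideal P.

Lemma id0 : P 0. Proof. by case: HP. Qed.
Lemma idD x y : P x -> P y -> P (x + y). Proof. by case: HP => _ h _; apply: h. Qed.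
Lemma idMl r x : P x -> P (r * x). Proof. by case: HP => _ _ h; apply: h. Qed.
Lemma idMr r x : P x -> P (x * r). Proof. by rewrite mulrC; apply: idMl. Qed.
Lemma idN x : P x -> P (- x). Proof. by move=> h; rewrite -mulN1r; apply: idMl. Qed.
Lemma idB x y : P x -> P y -> P (x - y). Proof. by move=> h1 h2; apply: idD => //; apply: idN. Qed.
Lemma idsum (I : eqType) (s : seq I) (F : I -> R) :
  (forall i, i \in s -> P (F i)) -> P (\sum_(i <- s) F i).
Proof.
elim: s => [|a s IH] h; first by rewrite big_nil; apply: id0.
rewrite big_cons; apply: idD; first by apply: h; rewrite in_cons eqxx.
by apply: IH => i hi; apply: h; rewrite in_cons hi orbT.
Qed.
End Ideals.

Section Max.
Variable R : comNzRingType.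
Variable P : R -> Prop.
Hypothesis HP : is_max_ideal P.

Lemma max_ideal : is_ideal P. Proof. by case: HP. Qed.
Lemma max_not1 : ~ P 1. Proof. by case: HP. Qed.

Lemma max_inv c : ~ P c -> exists p r, P p /\ 1 = p + r * c.
Proof.
move=> nc; have HI := max_ideal.
pose I y := exists p r, P p /\ y = p + r * c.
have II : is_ideal I.
  split.
  - by exists 0, 0; rewrite mul0r addr0; split => //; apply: (id0 HI).
  - move=> x y [p [r [Pp ->]]] [p' [r' [Pp' ->]]].
    exists (p + p'), (r + r'); split; first by apply: (idD HI).
    by rewrite mulrDl addrACA.
  - move=> s x [p [r [Pp ->]]]; exists (s * p), (s * r); split; first by apply: (idMl HI).
    by rewrite mulrDr mulrA.
case: HP => _ _ hmax.
have sub : forall x, P x -> I x by move=> x Px; exists x, 0; rewrite mul0r addr0.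
case: (hmax I II sub) => [h|//].
exfalso; apply: nc; apply: h; exists 0, 1; rewrite mul1r add0r; split => //; by apply: (id0 HI).
Qed.

Lemma max_prime x y : P (x * y) -> P x \/ P y.
Proof.
move=> hxy; have HI := max_ideal.
case: (classic (P x)) => hx; [by left | right].
have [p [r [Pp e]]] := max_inv hx.
have -> : y = p * y + r * (x * y) by rewrite mulrA -mulrDl -e mul1r.
by apply: (idD HI); [apply: (idMr HI) | apply: (idMl HI)].
Qed.
End Max.
Section Elim.
Variable R : comNzRingType.
Variable P : R -> Prop.
Hypothesis HP : is_max_ideal P.

Lemma elim_lem (I : eqType) (n' : nat) : forall (A : I -> nat -> R) (S : seq I),
  uniq S -> (n' < size S)%N ->
  exists c : I -> R, (exists i, i \in S /\ ~ P (c i)) /\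
    forall k, (k < n')%N -> P (\sum_(i <- S) c i * A i k).
Proof.
have HI := max_ideal HP.
elim: n' => [|n' IH] A S uS szS.
  case: S uS szS => [//|i0 S] _ _.
  exists (fun x => if x == i0 then 1 else 0); split => //.
  exists i0; split; first by rewrite in_cons eqxx.
  by rewrite eqxx; apply: max_not1.
case: (classic (exists i, i \in S /\ ~ P (A i n'))) => [[i0 [i0S na]]|hall].
  have [p [r [Pp e]]] := max_inv HP na.
  pose S' := rem i0 S.
  pose A' := fun i k => A i k - A i n' * r * A i0 k.
  have uS' : uniq S' by apply: rem_uniq.
  have szS' : (n' < size S')%N by rewrite size_rem //; move: szS; case: (size S).
  have [c' [[i1 [i1S nc1]] hc']] := IH A' S' uS' szS'.
  have i1i0 : i1 != i0 by move: i1S; rewrite (mem_rem_uniq _ uS) => /andP[].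
  pose sig := \sum_(i <- S') c' i * A i n'.
  exists (fun i => if i == i0 then - (sig * r) else c' i); split.
    exists i1; rewrite (negbTE i1i0); split => //.
    by move: i1S; rewrite (mem_rem_uniq _ uS) => /andP[].
  move=> k hk.
  rewrite (perm_big _ (perm_to_rem i0S)) big_cons eqxx.
  have -> : \sum_(i <- rem i0 S) (if i == i0 then - (sig * r) else c' i) * A i k
            = \sum_(i <- S') c' i * A i k.
    apply: eq_big_seq => i iS'.
    have -> : (i == i0) = false by apply/negbTE; move: iS'; rewrite (mem_rem_uniq _ uS) => /andP[].
    by [].
  case: (ltngtP k n') => [lt|gt|eqk].
  - have := hc' k lt; rewrite /A'.
    have -> : \sum_(i <- S') c' i * (A i k - A i n' * r * A i0 k)
           = \sum_(i <- S') c' i * A i k - sig * r * A i0 k.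
      rewrite /sig !mulr_suml -sumrB; apply: eq_bigr => i _; ring.
    by rewrite addrC mulNr.
  - by move: hk; rewrite ltnS leqNgt gt.
  - rewrite eqk.
    have E : - (sig * r) * A i0 n' + sig = sig * p.
      have -> : p = 1 - r * A i0 n' by rewrite e addrK.
      ring.
    have : P (sig * p) by apply: (idMl HI).
    by rewrite -E.
have hall' : forall i, i \in S -> P (A i n').
  by move=> i iS; apply: NNPP => np; apply: hall; exists i.
have [c [hc1 hc]] := IH A S uS (ltnW szS).
exists c; split => // k hk.
case: (ltngtP k n') => [lt|gt|->]; first by apply: hc.
  by move: hk; rewrite ltnS leqNgt gt.
by apply: (idsum HI) => i iS; apply: (idMl HI); apply: hall'.
Qed.
End Elim.
Section Mod.
Variable R : comNzRingType.
Variables (sigma sigmai : R -> R) (H J : R -> Prop) (M : zmodType).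
Variable act : int -> R -> M -> M.
Hypothesis Hmod : is_BR_module sigma sigmai H J act.
Local Notation Ip := (Ipow sigma sigmai H J).

Lemma actD n r v w : Ip n r -> act n r (v + w) = act n r v + act n r w.
Proof. by case: Hmod => h _ _ _; apply: h. Qed.
Lemma actDr n r s v : Ip n r -> Ip n s -> act n (r + s) v = act n r v + act n s v.
Proof. by case: Hmod => _ h _ _; apply: h. Qed.
Lemma act1 v : act 0 1 v = v. Proof. by case: Hmod. Qed.
Lemma actM n m r s v : Ip n r -> Ip m s ->
  act n r (act m s v) = act (n + m) (r * spow sigma sigmai n s) v.
Proof. by case: Hmod => _ _ _ h; apply: h. Qed.

Lemma act_v0 n r : Ip n r -> act n r 0 = 0.
Proof.
move=> h; have e := actD 0 0 h; rewrite addr0 in e.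
by apply: (addrI (act n r 0)); rewrite -e addr0.
Qed.
Lemma act00 v : act 0 0 v = 0.
Proof.
have e := @actDr 0 0 0 v I I; rewrite addr0 in e.
by apply: (addrI (act 0 0 v)); rewrite -e addr0.
Qed.
Lemma act_sum n r (I : Type) (s : seq I) (F : I -> M) : Ip n r ->
  act n r (\sum_(i <- s) F i) = \sum_(i <- s) act n r (F i).
Proof.
move=> h; elim: s => [|a s IH]; first by rewrite !big_nil act_v0.
by rewrite !big_cons actD // IH.
Qed.
Lemma act0_sumr (I : Type) (s : seq I) (F : I -> R) v :
  act 0 (\sum_(i <- s) F i) v = \sum_(i <- s) act 0 (F i) v.
Proof.
elim: s => [|a s IH]; first by rewrite !big_nil act00.
by rewrite !big_cons actDr // IH.
Qed.
Lemma act0M r s v : act 0 r (act 0 s v) = act 0 (r * s) v.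
Proof. by rewrite (@actM 0 0 r s v I I). Qed.

Lemma kernel (P : R -> Prop) c v : is_max_ideal P -> ~ P c -> wsp act P v ->
  act 0 c v = 0 -> v = 0.
Proof.
move=> HP nc hv hc.
have [p [r [Pp e]]] := max_inv HP nc.
by rewrite -[v]act1 e actDr // -act0M hc act_v0 // hv // add0r.
Qed.

Lemma dim_le (P : R -> Prop) n n' (u : 'I_n -> M) : is_max_ideal P ->
  (forall i, wsp act P (u i)) ->
  (forall c : 'I_n -> R, \sum_(i < n) act 0 (c i) (u i) = 0 -> forall i, P (c i)) ->
  has_basis act P n' -> (n <= n')%N.
Proof.
move=> HP hu hind [b [hb hspan _]].
rewrite leqNgt; apply/negP => lt.
have [A hA] : exists A : 'I_n -> 'I_n' -> R, forall i, u i = \sum_(k < n') act 0 (A i k) (b k).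
  exact: (fin_all_exists (fun i => hspan _ (hu i))).
pose AA i k := oapp (A i) 0 (insub k).
have sz : (n' < size (index_enum 'I_n))%N by rewrite -(filter_predT (index_enum _)) deprecated_filter_index_enum -cardE card_ord.
have [c [[i [_ nci]] hc]] := elim_lem HP AA (index_enum_uniq _) sz.
apply: nci; apply: hind => //.
transitivity (\sum_(i < n) \sum_(k < n') act 0 (c i * A i k) (b k)).
  by apply: eq_bigr => j _; rewrite hA act_sum //; apply: eq_bigr => k _; rewrite act0M.
rewrite exchange_big /=; apply: big1 => k _.
rewrite -act0_sumr; apply: hb.
by have := hc (val k) (ltn_ord k); rewrite /AA valK.
Qed.
End Mod.
Section Mod2.
Variable R : comNzRingType.
Variables (sigma sigmai : R -> R) (H J : R -> Prop) (M : zmodType).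
Variable act : int -> R -> M -> M.
Hypothesis Hmod : is_BR_module sigma sigmai H J act.
Local Notation Ip := (Ipow sigma sigmai H J).

Lemma actN n r v : Ip n r -> act n r (- v) = - act n r v.
Proof.
move=> h; apply/eqP; rewrite -subr_eq0 opprK -(actD Hmod _ _ h) addNr.
by rewrite (act_v0 Hmod h).
Qed.

Lemma actB n r v w : Ip n r -> act n r (v - w) = act n r v - act n r w.
Proof. by move=> h; rewrite (actD Hmod _ _ h) (actN _ h). Qed.

Lemma wsp_comb (P : R -> Prop) k (b : 'I_k -> M) (s : 'I_k -> R) :
  (forall i, wsp act P (b i)) -> wsp act P (\sum_(i < k) act 0 (s i) (b i)).
Proof.
move=> hb r Pr; rewrite (act_sum Hmod) //; apply: big1 => i _.
by rewrite (act0M Hmod) mulrC -(act0M Hmod) hb // (act_v0 Hmod).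
Qed.

Lemma inj_of_ker (P : R -> Prop) n r : Ip n r ->
  (forall d, wsp act P d -> act n r d = 0 -> d = 0) ->
  forall v w, wsp act P v -> wsp act P w -> act n r v = act n r w -> v = w.
Proof.
move=> h hk v w hv hw e; apply/eqP; rewrite -subr_eq0; apply/eqP; apply: hk.
  by move=> x Px; rewrite actB // hv // hw // subrr.
by rewrite actB // e subrr.
Qed.

Lemma transfer (P Q : R -> Prop) n n' k r (tau : R -> R) :
  is_max_ideal Q -> Ip k r ->
  (forall v, wsp act P v -> wsp act Q (act k r v)) ->
  (forall x v, act 0 x (act k r v) = act k r (act 0 (tau x) v)) ->
  (forall x, P (tau x) -> Q x) ->
  (forall d, wsp act P d -> act k r d = 0 -> d = 0) ->
  has_basis act P n -> has_basis act Q n' -> (n <= n')%N.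
Proof.
move=> HQ hr ha hb hc hd [b [hbw _ hind]] hQ.
apply: (@dim_le _ _ _ _ _ _ _ Hmod Q n n' (fun i => act k r (b i)) HQ _ _ hQ).
  by move=> i; apply: ha.
move=> c hs i.
apply: hc; apply: (hind (fun i => tau (c i))) => {i}.
apply: hd; first by apply: wsp_comb.
rewrite (act_sum Hmod) // -[RHS]hs; apply: eq_bigr => i _; by rewrite hb.
Qed.
End Mod2.
Theorem proposition3p1
  (R : idomainType) (sigma : {rmorphism R -> R}) (sigmai : R -> R)
  (Hsig1 : cancel sigma sigmai) (Hsig2 : cancel sigmai sigma)
  (H J : R -> Prop) (HH : is_ideal H) (HJ : is_ideal J)
  (Hnz : forall n : int, exists x, Ipow sigma sigmai H J n x /\ x != 0)
  (M : zmodType) (act : int -> R -> M -> M)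
  (Hmod : is_BR_module sigma sigmai H J act)
  (Hw : weight_module act)
  (m : R -> Prop) (Hm : is_max_ideal m)
  (HS : ~ inSB H J (imgp sigma sigmai 1 m)) :
  (forall j h, J j -> ~ imgp sigma sigmai 1 m j ->
               H h -> ~ imgp sigma sigmai 1 m h ->
     (forall v w, wsp act m v -> wsp act m w ->
        act 1 j v = act 1 j w -> v = w) /\
     (forall v w, wsp act (imgp sigma sigmai 1 m) v -> wsp act (imgp sigma sigmai 1 m) w ->
        act (-1) (sigmai h) v = act (-1) (sigmai h) w -> v = w)) /\
  (exists n, has_basis act m n /\ has_basis act (imgp sigma sigmai 1 m) n).
Proof.
set sm := imgp sigma sigmai 1 m.
have smE x : sm x <-> m (sigmai x) by [].
have HmI := max_ideal Hm.
have sp0 y : spow sigma sigmai 0 y = y by [].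
have sp1 y : spow sigma sigmai 1 y = sigma y by [].
have spN1 y : spow sigma sigmai (-1) y = sigmai y by [].
have Hsm : is_max_ideal sm.
  split.
  - split; first by rewrite /sm /imgp /= -[0](rmorph0 sigma) Hsig1; apply: (id0 HmI).
    + move=> x y hx hy; apply/smE.
      by rewrite -[x]Hsig2 -[y]Hsig2 -rmorphD Hsig1; apply: (idD HmI).
    + move=> r x hx; apply/smE.
      by rewrite -[r]Hsig2 -[x]Hsig2 -rmorphM Hsig1; apply: (idMl HmI).
  - by move/smE; rewrite -[1](rmorph1 sigma) Hsig1; apply: (max_not1 Hm).
  - move=> I II sub.
    pose I' x := I (sigma x).
    have II' : is_ideal I'.
      split; rewrite /I'.
      + by rewrite rmorph0; apply: (id0 II).
      + by move=> x y hx hy; rewrite rmorphD; apply: (idD II).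
      + by move=> r x hx; rewrite rmorphM; apply: (idMl II).
    have sub' : forall x, m x -> I' x.
      by move=> x hx; apply: sub; apply/smE; rewrite Hsig1.
    case: Hm => _ _ /(_ I' II' sub') [h|h].
      by left => x hx; apply/smE; apply: h; rewrite /I' Hsig2.
    by right; move: h; rewrite /I' rmorph1.
have HsmI := max_ideal Hsm.
have aM := @actM _ _ _ _ _ _ _ Hmod.
have phi_ker : forall j h, J j -> ~ sm j -> H h -> ~ sm h ->
    forall d, wsp act m d -> act 1 j d = 0 -> d = 0.
  move=> j h Jj nj Hh nh d hd e.
  have hIh : Ipow sigma sigmai H J (-1) (sigmai h) by change (H (sigma (sigmai h))); rewrite Hsig2.
  apply: (kernel Hmod (c := sigmai h * sigmai j) Hm) => //.
    by case/(max_prime Hm).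
  have := actM Hmod d hIh (Jj : Ipow sigma sigmai H J 1 j).
  by rewrite e (act_v0 Hmod hIh) addNr.
have psi_ker : forall j h, J j -> ~ sm j -> H h -> ~ sm h ->
    forall d, wsp act sm d -> act (-1) (sigmai h) d = 0 -> d = 0.
  move=> j h Jj nj Hh nh d hd e.
  have hIh : Ipow sigma sigmai H J (-1) (sigmai h) by change (H (sigma (sigmai h))); rewrite Hsig2.
  apply: (kernel Hmod (c := j * h) Hsm) => //.
    by case/(max_prime Hsm).
  have := actM Hmod d (Jj : Ipow sigma sigmai H J 1 j) hIh.
  by rewrite e (act_v0 Hmod (Jj : Ipow sigma sigmai H J 1 j)) addrN sp1 Hsig2.
split.
  move=> j h Jj nj Hh nh; split.
    apply: (inj_of_ker Hmod (Jj : Ipow sigma sigmai H J 1 j)).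
    exact: (phi_ker j h).
  have hIh : Ipow sigma sigmai H J (-1) (sigmai h) by change (H (sigma (sigmai h))); rewrite Hsig2.
  apply: (inj_of_ker Hmod hIh).
  exact: (psi_ker j h).
have [x [hx nx]] : exists x, idprod H J x /\ ~ sm x.
  apply: NNPP => hn; apply: HS; split.
    split => //; [exact: max_not1 Hsm | exact: max_prime Hsm].
  by move=> x hx; apply: NNPP => nx; apply: hn; exists x.
case: hx => k [a [b [hab ex]]].
have [i ni] : exists i, ~ sm (a i * b i).
  apply: NNPP => hn; apply: nx; rewrite ex; apply: (idsum HsmI) => i _.
  by apply: NNPP => ni; apply: hn; exists i.
have [Ha Jb] := hab i.
set h := a i in Ha ni; set j := b i in Jb ni.
have nh : ~ sm h by move=> hh; apply: ni; apply: (idMr HsmI).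
have nj : ~ sm j by move=> hj; apply: ni; apply: (idMl HsmI).
case: Hw => _ _ hfin.
have [n1 B1] := hfin m Hm.
have [n2 B2] := hfin sm Hsm.
have hJj : Ipow sigma sigmai H J 1 j by [].
have hIh : Ipow sigma sigmai H J (-1) (sigmai h) by change (H (sigma (sigmai h))); rewrite Hsig2.
have le12 : (n1 <= n2)%N.
  apply: (transfer Hmod (tau := sigmai) Hsm hJj _ _ _ (phi_ker j h Jb nj Ha nh) B1 B2).
  - move=> v hv r hr.
    rewrite (aM 0 1 r j v I hJj) add0r.
    have -> : r * spow sigma sigmai 0 j = j * spow sigma sigmai 1 (sigmai r).
      by rewrite sp0 sp1 Hsig2 mulrC.
    have := aM 1 0 j (sigmai r) v hJj I; rewrite addr0 => <-; rewrite hv //.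
    exact: (act_v0 Hmod hJj).
  - move=> y v; rewrite (aM 0 1 y j v I hJj) (aM 1 0 j (sigmai y) v hJj I) add0r addr0 sp0 sp1.
    by rewrite Hsig2 mulrC.
  - by move=> y; rewrite smE.
have le21 : (n2 <= n1)%N.
  apply: (transfer Hmod (tau := sigma) Hm hIh _ _ _ (psi_ker j h Jb nj Ha nh) B2 B1).
  - move=> v hv r hr.
    rewrite (aM 0 (-1) r (sigmai h) v I hIh) add0r.
    have -> : r * spow sigma sigmai 0 (sigmai h) = sigmai h * spow sigma sigmai (-1) (sigma r).
      by rewrite sp0 spN1 Hsig1 mulrC.
    have := aM (-1) 0 (sigmai h) (sigma r) v hIh I; rewrite addr0 => <-; rewrite hv; first exact: (act_v0 Hmod hIh).
    by apply/smE; rewrite Hsig1.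
  - move=> y v; rewrite (aM 0 (-1) y (sigmai h) v I hIh) (aM (-1) 0 (sigmai h) (sigma y) v hIh I) add0r addr0 sp0 spN1.
    by rewrite Hsig1 mulrC.
  - by move=> y /smE; rewrite Hsig1.
have e : n1 = n2 by apply/eqP; rewrite eqn_leq le12 le21.
by exists n1; split => //; rewrite e.
Qed.
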